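(* Let $R$ be a commutative ring with identity, $n>1$, $S=M_n(R)$. If $A_1,A_2$ are vertices of the orthogonality graph $O(S)$ with $d(A_1,A_2)>3$, then $\operatorname{Ann}(\det A_1)=\operatorname{Ann}(\det A_2)$, and this ideal $I$ has no zero-divisors in the sense that $xy\ne0$ for all nonzero $x,y\in I$.
   Context: The orthogonality graph $O(S)$ of a ring $S$ is the undirected graph whose vertices are the nonzero two-sided zero-divisors of $S$, distinct vertices $x,y$ being adjacent iff $xy=yx=0$; $d$ is the graph distance. $\operatorname{Ann}(a)=\{x\in R: ax=0\}$. *)

(* Defs.v *)
From HB Require Import structures.
From mathcomp Require Import all_boot all_order all_algebra.
Set Implicit Arguments. Unset Strict Implicit. Unset Printing Implicit Defensive.
Import GRing.Theory.
Local Open Scope ring_scope.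

Section OrthGraph.
Variable S : pzRingType.

Definition two_sided_zdiv (x : S) : Prop :=
  (exists y : S, y != 0 /\ x * y = 0) /\ (exists z : S, z != 0 /\ z * x = 0).

Definition orth_vertex (x : S) : Prop := x != 0 /\ two_sided_zdiv x.

Definition orth_adj (x y : S) : Prop :=
  [/\ orth_vertex x, orth_vertex y, x != y, x * y = 0 & y * x = 0].

Fixpoint orth_walk (x : S) (s : seq S) (y : S) : Prop :=
  match s with
  | [::] => x = y
  | z :: s' => orth_adj x z /\ orth_walk z s' y
  end.

Definition orth_dist_le (x y : S) (k : nat) : Prop :=
  exists s : seq S, (size s <= k)%N /\ orth_walk x s y.
End OrthGraph.

Definition Ann (R : pzRingType) (a : R) : R -> Prop := fun x => a * x = 0.

(* Main.v *)
Require Import Defs.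
From Stdlib Require Import Classical.
From HB Require Import structures.
From mathcomp Require Import all_boot all_order all_algebra.
Set Implicit Arguments. Unset Strict Implicit. Unset Printing Implicit Defensive.
Import GRing.Theory.
Local Open Scope ring_scope.

Section McCoy.
Variables (R : comNzRingType) (n : nat) (A : 'M[R]_n) (x : R).

Definition Pk k := forall f g : 'I_k -> 'I_n, x * \det (mxsub f g A) = 0.

Lemma Pn : x * \det A = 0 -> Pk n.
Proof.
move=> hx f g.
have -> : mxsub f g A = rowsub f 1%:M *m A *m colsub g 1%:M.
  by rewrite mulmx_colsub mulmx1 mul_rowsub_mx mul1mx; apply/matrixP=> i j; rewrite !mxE.
rewrite !det_mulmx mulrA mulrA (mulrC x) -(mulrA _ x) hx; by rewrite mulr0 mul0r.
Qed.

Lemma not_all_zero k : ~ Pk k -> exists f g : 'I_k -> 'I_n, x * \det (mxsub f g A) != 0.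
Proof.
move=> H; apply: NNPP => H2; apply: H => f g.
case: (eqVneq (x * \det (mxsub f g A)) 0) => // hne.
by exfalso; apply: H2; exists f, g.
Qed.

Lemma exists_t : ~ Pk 0 -> Pk n -> exists t, (t < n)%N /\ ~ Pk t /\ Pk t.+1.
Proof.
move=> h0 hn; apply: NNPP => H.
suff : forall k, (k <= n)%N -> ~ Pk k by move/(_ n (leqnn n)).
elim=> [|k IH] // hk hk1.
apply: H; exists k; split => //; split => //.
by apply: IH; apply: ltnW.
Qed.


Lemma injf_of_det k (f g : 'I_k -> 'I_n) : x * \det (mxsub f g A) != 0 -> injective f.
Proof.
move=> h i j eq; case: (eqVneq i j) => // neq; exfalso; move/eqP: h; apply.
by rewrite (determinant_alternate neq) ?mulr0 // => l; rewrite !mxE eq.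
Qed.

Lemma injg_of_det k (f g : 'I_k -> 'I_n) : x * \det (mxsub f g A) != 0 -> injective g.
Proof.
move=> h i j eq; case: (eqVneq i j) => // neq; exfalso; move/eqP: h; apply.
by rewrite -det_tr (determinant_alternate neq) ?mulr0 // => l; rewrite !mxE eq.
Qed.

Lemma notin_codom k (f : 'I_k -> 'I_n) : injective f -> (k < n)%N ->
  exists i0, i0 \notin codom f.
Proof.
move=> finj hk; case: (pickP [pred i | i \notin codom f]) => [i0 H|H]; first by exists i0.
exfalso; have := cardC (mem (codom f)).
by rewrite (eq_card0 H) addn0 card_codom // !card_ord => e; rewrite e ltnn in hk.
Qed.

Definition ext k (f : 'I_k -> 'I_n) i0 : 'I_k.+1 -> 'I_n :=
  fun i => if unlift ord_max i is Some j then f j else i0.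

Lemma ext_lift k (f : 'I_k -> 'I_n) i0 j : ext f i0 (lift ord_max j) = f j.
Proof. by rewrite /ext liftK. Qed.

Lemma ext_max k (f : 'I_k -> 'I_n) i0 : ext f i0 ord_max = i0.
Proof. by rewrite /ext unlift_none. Qed.

Lemma ext_eq k (f : 'I_k -> 'I_n) i0 i : i0 \notin codom f -> ext f i0 i = i0 -> i = ord_max.
Proof.
move=> hi; rewrite /ext; case: unliftP => [j ->|->] // e.
by rewrite -e codom_f in hi.
Qed.

Definition upd m (f : 'I_m -> 'I_n) q r := fun i => if i == q then r else f i.

Lemma row_expand m (f g : 'I_m -> 'I_n) : Pk m ->
  x *: (colsub g A *m \adj (mxsub f g A)) = 0.
Proof.
move=> Pm; apply/matrixP => r q; rewrite !mxE.
rewrite -[RHS](Pm (upd f q r) g) (expand_det_row (mxsub (upd f q r) g A) q); congr (_ * _).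
apply: eq_bigr => p _; rewrite !mxE /upd eqxx; congr (_ * _).
rewrite /cofactor; congr (_ * \det _); apply/matrixP => i j.
by rewrite !mxE eq_sym (negbTE (neq_lift q i)).
Qed.

Lemma col_expand m (f g : 'I_m -> 'I_n) : Pk m ->
  x *: (\adj (mxsub f g A) *m rowsub f A) = 0.
Proof.
move=> Pm; apply/matrixP => p l; rewrite !mxE.
rewrite -[RHS](Pm f (upd g p l)) (expand_det_col (mxsub f (upd g p l) A) p); congr (_ * _).
apply: eq_bigr => q _; rewrite !mxE /upd eqxx mulrC; congr (_ * _).
rewrite /cofactor; congr (_ * \det _); apply/matrixP => i j.
by rewrite !mxE eq_sym (negbTE (neq_lift p j)).
Qed.


Lemma mccoy : x != 0 -> x * \det A = 0 ->
  exists D0 : 'M_n, x *: D0 != 0 /\ A *m (x *: D0) = 0 /\ (x *: D0) *m A = 0.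
Proof.
move=> x0 hx.
have f0 : 'I_0 -> 'I_n by case.
have nP0 : ~ Pk 0.
  move=> H; have := H f0 f0; rewrite det_mx00 mulr1 => e; by rewrite e eqxx in x0.
have [t [ht [nPt Pt1]]] := exists_t nP0 (Pn hx).
have [f [g hfg]] := not_all_zero nPt.
have [i0 hi0] := notin_codom (injf_of_det hfg) ht.
have [j0 hj0] := notin_codom (injg_of_det hfg) ht.
pose f' := ext f i0; pose g' := ext g j0.
pose P := mxsub f' g' A.
exists (colsub g' 1%:M *m \adj P *m rowsub f' 1%:M).
split; [|split].
- apply/negP => /eqP H.
  have := congr1 (fun M : 'M_n => M j0 i0) H; rewrite !mxE.
  rewrite (bigD1 ord_max) //= big1 ?addr0 => [|j hj]; last first.
    rewrite !mxE; case: eqP => [/(ext_eq hi0) e|_]; first by rewrite e eqxx in hj.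
    by rewrite mulr0n mulr0.
  rewrite !mxE /f' ext_max eqxx mulr1n mulr1.
  rewrite (bigD1 ord_max) //= big1 ?addr0 => [|j hj]; last first.
    rewrite !mxE; case: eqP => [e|_]; last by rewrite mulr0n mul0r.
    by move: e => /esym /(ext_eq hj0) e; rewrite e eqxx in hj.
  rewrite !mxE /g' ext_max eqxx mulr1n mul1r.
rewrite /cofactor.   have -> : row' ord_max (col' ord_max P) = mxsub f g A.
    by apply/matrixP => i j; rewrite !mxE /f' /g' !ext_lift.
  rewrite -signr_odd oddD addbb expr0 mul1r => e.
  by rewrite e eqxx in hfg.
- rewrite -scalemxAr !mulmxA mulmx_colsub mulmx1 scalemxAl row_expand //.
  by rewrite mul0mx.
- rewrite -scalemxAl -!mulmxA -rowsubE scalemxAr col_expand //.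
  by rewrite mulmx0.
Qed.

End McCoy.

Section Graph.
Variable S : pzRingType.

Lemma walk_rcons (x : S) s y z : orth_walk x s y -> orth_adj y z -> orth_walk x (rcons s z) z.
Proof.
elim: s x => [|w s IH] x /=; first by move=> -> h; split.
by move=> [h1 h2] h; split => //; exact: IH.
Qed.

Lemma dist_step (x y z : S) k : orth_dist_le x y k -> (y = z \/ orth_adj y z) ->
  orth_dist_le x z k.+1.
Proof.
case=> s [hs hw] [<-|h]; first by exists s; split => //; exact: leqW.
by exists (rcons s z); split; [rewrite size_rcons | exact: walk_rcons hw h].
Qed.

Lemma step_of (u v : S) : orth_vertex u -> orth_vertex v -> u * v = 0 -> v * u = 0 ->
  u = v \/ orth_adj u v.
Proof. by move=> hu hv h1 h2; case: (eqVneq u v) => [->|ne]; [left | right; split]. Qed.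

Lemma vertex_of (A D : S) : A != 0 -> D != 0 -> A * D = 0 -> D * A = 0 -> orth_vertex D.
Proof. by move=> hA hD h1 h2; split => //; split; exists A; split. Qed.

Lemma path3 (A1 A2 D E : S) : orth_vertex A1 -> orth_vertex A2 ->
  D != 0 -> A1 * D = 0 -> D * A1 = 0 -> E != 0 -> A2 * E = 0 -> E * A2 = 0 ->
  D * E = 0 -> E * D = 0 -> orth_dist_le A1 A2 3.
Proof.
move=> v1 v2 hD h1 h2 hE h3 h4 h5 h6.
have vD := vertex_of v1.1 hD h1 h2; have vE := vertex_of v2.1 hE h3 h4.
apply: (dist_step (y := E)); last exact: (step_of vE v2 h4 h3).
apply: (dist_step (y := D)); last exact: (step_of vD vE h5 h6).
apply: (dist_step (y := A1)); last exact: (step_of v1 vD h1 h2).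
by exists [::].
Qed.
End Graph.

Section Main.
Variables (R : comNzRingType) (n : nat).

Lemma det_zdiv (A B : 'M[R]_n) : B != 0 -> A *m B = 0 ->
  exists y, y != 0 /\ y * \det A = 0.
Proof.
move=> hB hAB.
have e : (\det A) *: B = 0 by rewrite -mul_scalar_mx -mul_adj_mx -mulmxA hAB mulmx0.
case: (pickP [pred ij : 'I_n * 'I_n | B ij.1 ij.2 != 0]) => [[i j] /= hij | H].
  exists (B i j); split => //; move/matrixP: e => /(_ i j); rewrite !mxE mulrC //.
exfalso; move/eqP: hB; apply; apply/matrixP => i j.
by have := H (i, j); rewrite /= => /negbFE/eqP ->; rewrite mxE.
Qed.

Lemma core (A1 A2 : 'M[R]_n) : orth_vertex A1 -> orth_vertex A2 ->
  (forall D E : 'M_n, D != 0 -> A1 *m D = 0 -> D *m A1 = 0 -> E != 0 ->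
     A2 *m E = 0 -> E *m A2 = 0 -> D *m E = 0 -> E *m D = 0 -> False) ->
  forall x, x * \det A1 = 0 -> x * \det A2 = 0.
Proof.
move=> v1 [_ [[B [hB hAB]] _]] H x hx.
case: (eqVneq (x * \det A2) 0) => // hz; exfalso.
have [y [y0 hy]] := det_zdiv hB hAB.
have hz1 : (x * \det A2) * \det A1 = 0 by rewrite mulrAC hx mul0r.
have [D0 [hD [hD1 hD2]]] := mccoy hz hz1.
have [E0 [hE [hE1 hE2]]] := mccoy y0 hy.
have hzy : (x * \det A2) * y = 0 by rewrite -mulrA (mulrC _ y) hy mulr0.
apply: (H _ _ hD hD1 hD2 hE hE1 hE2).
  by rewrite -scalemxAl -scalemxAr scalerA hzy scale0r.
by rewrite -scalemxAl -scalemxAr scalerA mulrC hzy scale0r.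
Qed.
End Main.

Unset Implicit Arguments.

Theorem lemma4 (R : comNzRingType) (n : nat) (hn : (1 < n)%N)
    (A1 A2 : 'M[R]_n) :
  orth_vertex A1 -> orth_vertex A2 -> ~ orth_dist_le A1 A2 3 ->
  (forall x : R, Ann (\det A1) x <-> Ann (\det A2) x) /\
  (forall x y : R, Ann (\det A1) x -> Ann (\det A1) y ->
     x != 0 -> y != 0 -> x * y != 0).
Proof.
move=> v1 v2 nd.
have H : forall D E : 'M_n, D != 0 -> A1 *m D = 0 -> D *m A1 = 0 -> E != 0 ->
     A2 *m E = 0 -> E *m A2 = 0 -> D *m E = 0 -> E *m D = 0 -> False.
  by move=> D E h1 h2 h3 h4 h5 h6 h7 h8; apply: nd; exact: (path3 v1 v2 h1 h2 h3 h4 h5 h6 h7 h8).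
have H' : forall D E : 'M_n, D != 0 -> A2 *m D = 0 -> D *m A2 = 0 -> E != 0 ->
     A1 *m E = 0 -> E *m A1 = 0 -> D *m E = 0 -> E *m D = 0 -> False.
  by move=> D E h1 h2 h3 h4 h5 h6 h7 h8; exact: (H E D h4 h5 h6 h1 h2 h3 h8 h7).
have i12 := core v1 v2 H; have i21 := core v2 v1 H'.
rewrite /Ann; split.
  move=> x; split => h; rewrite mulrC; [apply: i12 | apply: i21]; by rewrite mulrC.
move=> x y hx hy x0 y0; apply/eqP => hxy.
have hx' : x * \det A1 = 0 by rewrite mulrC.
have hy' : y * \det A2 = 0 by apply: i12; rewrite mulrC.
have [D0 [hD [hD1 hD2]]] := mccoy x0 hx'.
have [E0 [hE [hE1 hE2]]] := mccoy y0 hy'.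
apply: (H _ _ hD hD1 hD2 hE hE1 hE2).
  by rewrite -scalemxAl -scalemxAr scalerA hxy scale0r.
by rewrite -scalemxAl -scalemxAr scalerA mulrC hxy scale0r.
Qed.
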